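(* Let $G$ be a finite simple graph, let $I$ be a maximum critical independent set in $G$, and let $X=I\cup N(I)$. Then $\operatorname{diadem}(G)\subseteq \operatorname{diadem}(G[X])$ and $\operatorname{nucleus}(G[X])\subseteq \operatorname{nucleus}(G)$.
   Context: For a graph $H$ and $Y\subseteq V(H)$, $N_H(Y)$ is the set of vertices of $H$ adjacent to some vertex of $Y$, and $d_H(Y)=|Y|-|N_H(Y)|$. An independent set $S$ of $H$ is critical in $H$ if $d_H(S)=\max\{d_H(Y):Y\subseteq V(H)\}$; the empty set may be critical. A maximum critical independent set of $H$ is a critical independent set of $H$ of maximum cardinality. $\operatorname{nucleus}(H)$ and $\operatorname{diadem}(H)$ are, respectively, the intersection and the union of all maximum critical independent sets of $H$. $N(I)=N_G(I)$, and $G[X]$ is the subgraph of $G$ induced by $X$. *)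

(* Defs.v *)
(* A finite simple graph is a symmetric irreflexive relation
   e on a finType T. A graph H is represented by a vertex set V : {set T}
   together with the restriction of e to V; G itself is V = setT, and the
   induced subgraph G[X] is V = X. *)
From mathcomp Require Import all_boot all_order all_algebra.
Set Implicit Arguments. Unset Strict Implicit. Unset Printing Implicit Defensive.
Import Order.TTheory GRing.Theory Num.Theory.

Section Graphs.
Variables (T : finType) (e : rel T).

Definition nbhd (V Y : {set T}) : {set T} :=
  [set v in V | [exists y in Y, e y v]].

Definition dH (V Y : {set T}) : int := (#|Y|%:Z - #|nbhd V Y|%:Z)%R.

Definition independent (V S : {set T}) : bool :=
  (S \subset V) && [forall x in S, forall y in S, ~~ e x y].

Definition critical_indep (V S : {set T}) : bool :=
  independent V S &&
  [forall Y : {set T}, (Y \subset V) ==> (dH V Y <= dH V S)%R].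

Definition max_critical_indep (V S : {set T}) : bool :=
  critical_indep V S &&
  [forall S' : {set T}, critical_indep V S' ==> (#|S'| <= #|S|)].

Definition nucleus (V : {set T}) : {set T} :=
  [set v in V | [forall S : {set T}, max_critical_indep V S ==> (v \in S)]].

Definition diadem (V : {set T}) : {set T} :=
  [set v | [exists S : {set T}, max_critical_indep V S && (v \in S)]].

End Graphs.

(* Main.v *)
Require Import Defs.
From mathcomp Require Import all_boot all_order all_algebra.
From mathcomp Require Import zify.
Set Implicit Arguments. Unset Strict Implicit. Unset Printing Implicit Defensive.

Section Aux.
Variables (T : finType) (e : rel T).
Hypothesis e_sym : symmetric e.
Hypothesis e_irr : irreflexive e.

Local Notation N Y := (nbhd e [set: T] Y).
Local Notation dG := (dH e [set: T]).

Local Definition myE := (in_setI, in_setU, in_setD, in_set0, in_setT, andbT, andTb).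

Lemma inNP x (Y : {set T}) : reflect (exists2 y, y \in Y & e y x) (x \in N Y).
Proof.
rewrite inE in_setT /=; apply: (iffP existsP) => [[y /andP[? ?]]|[y ? ?]].
  by exists y.
by exists y; apply/andP.
Qed.

Lemma nbhdX (X Y : {set T}) : nbhd e X Y = N Y :&: X.
Proof. by apply/setP=> x; rewrite !inE ?andbT andbC. Qed.

Lemma N_mono (A B : {set T}) : A \subset B -> N A \subset N B.
Proof.
move=> sAB; apply/subsetP=> x /inNP [y yA exy]; apply/inNP; exists y => //.
exact: (subsetP sAB).
Qed.

Lemma N_U (A B : {set T}) : N (A :|: B) = N A :|: N B.
Proof.
apply/setP=> x; apply/idP/idP.
  case/inNP=> y; rewrite myE => /orP[yA|yB] exy; rewrite myE; apply/orP.
    by left; apply/inNP; exists y.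
  by right; apply/inNP; exists y.
rewrite myE => /orP[] /inNP [y yA exy]; apply/inNP; exists y => //;
  by rewrite myE yA ?orbT.
Qed.

Lemma critP (V S : {set T}) : critical_indep e V S ->
  [/\ S \subset V, (forall x y, x \in S -> y \in S -> ~~ e x y) &
      forall Y : {set T}, Y \subset V -> (dH e V Y <= dH e V S)%R].
Proof.
case/andP => /andP[sub /forallP H] /forallP H2; split => //.
  move=> x y xS yS; move: (H x) => /implyP /(_ xS) /forallP /(_ y) /implyP; apply.
  exact: yS.
by move=> Y YV; exact: (implyP (H2 Y) YV).
Qed.

Lemma critI (V S : {set T}) : S \subset V -> (forall x y, x \in S -> y \in S -> ~~ e x y) ->
  (forall Y : {set T}, Y \subset V -> (dH e V Y <= dH e V S)%R) -> critical_indep e V S.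
Proof.
move=> sub H H2; apply/andP; split.
  apply/andP; split => //; apply/forallP=> x; apply/implyP=> xS.
  by apply/forallP=> y; apply/implyP=> yS; exact: H.
by apply/forallP=> Y; apply/implyP; exact: H2.
Qed.

Variable I : {set T}.
Hypothesis indI : forall x y, x \in I -> y \in I -> ~~ e x y.
Hypothesis critG : forall Y : {set T}, (dG Y <= dG I)%R.

Lemma NI_I : N I :&: I = set0.
Proof.
apply/setP=> x; rewrite !myE; apply/negP=> /andP[/inNP [y yI eyx] xI].
by move: (indI yI xI); rewrite eyx.
Qed.

Lemma hall (B : {set T}) : B \subset N I -> #|B| <= #|N B :&: I|.
Proof.
move=> sB.
set I' := I :\: N B.
have sub : N I' \subset N I :\: B.
  apply/subsetP=> x /inNP [y]; rewrite /I' myE => /andP[yNB yI] eyx.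
  rewrite myE; apply/andP; split; last by apply/inNP; exists y.
  apply/negP=> xB; move/negP: yNB; apply; apply/inNP; exists x => //.
  by rewrite e_sym.
have c1 := cardsID B (N I).
have e1 : N I :&: B = B by apply/setIidPr.
rewrite e1 in c1.
have c2 := cardsID (N B) I.
have c3 := subset_leq_card sub.
have h := critG I'.
rewrite /dH in h.
rewrite setIC.
rewrite -/I' in c2. lia.
Qed.

Lemma bound_indep (Y : {set T}) : Y \subset I :|: N I ->
  (forall x y, x \in Y -> y \in Y -> ~~ e x y) -> #|Y| <= #|I|.
Proof.
move=> sY indY.
set A := Y :&: I; set B := Y :&: N I.
have eY : A :|: B = Y by rewrite -setIUr; apply/setIidPl.
have c1 := cardsUI A B.
rewrite eY in c1.
have hB := hall (subsetIr Y (N I)).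
have c2 := cardsUI A (N B :&: I).
have d : A :&: (N B :&: I) = set0.
  apply/setP=> x; rewrite !myE; apply/negP=> /andP[/andP[xY _] /andP[/inNP [y yB eyx] _]].
  move: yB; rewrite myE => /andP[yY _].
  by move: (indY y x yY xY); rewrite eyx.
rewrite d cards0 in c2.
have s : A :|: (N B :&: I) \subset I.
  by apply/subsetP=> x; rewrite !myE => /orP[/andP[]|/andP[]].
have c3 := subset_leq_card s.
rewrite -/B in hB.
lia.
Qed.

Lemma F1 (Y : {set T}) : Y \subset I :|: N I -> (dH e (I :|: N I) Y <= dG I)%R.
Proof.
move=> sY.
set A := Y :&: I; set B := Y :&: N I.
have eY : A :|: B = Y by rewrite -setIUr; apply/setIidPl.
have c1 := cardsUI A B.
rewrite eY in c1.
have hB := hall (subsetIr Y (N I)).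
rewrite -/B in hB.
have s : N A :|: (N B :&: I) \subset nbhd e (I :|: N I) Y.
  rewrite (nbhdX (I :|: N I)); apply/subsetP=> x; rewrite !myE => /orP[xA|/andP[xB xI]].
    rewrite (subsetP (N_mono (subsetIl Y I)) x xA) /=.
    by rewrite (subsetP (N_mono (subsetIr Y I)) x xA) orbT.
  by rewrite xI (subsetP (N_mono (subsetIl Y (N I))) x xB).
have d : N A :&: (N B :&: I) = set0.
  apply/setP=> x; rewrite !myE; apply/negP=> /andP[xA /andP[_ xI]].
  have : x \in N I :&: I by rewrite myE xI (subsetP (N_mono (subsetIr Y I)) x xA).
  by rewrite NI_I myE.
have c2 := cardsUI (N A) (N B :&: I).
rewrite d cards0 in c2.
have c3 := subset_leq_card s.
have h := critG A.
rewrite /dH in h *.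
lia.
Qed.

Hypothesis maxI : forall S : {set T}, critical_indep e [set: T] S -> #|S| <= #|I|.

Lemma subX (S : {set T}) : critical_indep e [set: T] S -> S \subset I :|: N I.
Proof.
case/critP=> _ indS critS.
have hSI := critS I (subsetT I).
have hcap := critG (S :&: I).
(* supermodularity *)
have sup : (dG I <= dG (S :|: I))%R.
  have c1 := cardsUI S I.
  have c2 := cardsUI (N S) (N I).
  have e3 : N (S :|: I) = N S :|: N I by apply: N_U.
  have s4 : N (S :&: I) \subset N S :&: N I.
    by rewrite subsetI !N_mono ?subsetIl ?subsetIr.
  have c4 := subset_leq_card s4.
  rewrite /dH in hSI hcap *; rewrite e3.
  lia.
set S1 := S :&: N I.
set J := I :|: (S :\: N I).
have hS1 := hall (subsetIr S (N I)).
rewrite -/S1 in hS1.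
have s1 : S :|: I \subset J :|: S1.
  apply/subsetP=> x; rewrite !myE.
  by case: (x \in I); case: (x \in S); case: (x \in N I).
have c1 := subset_leq_card s1.
have c1' := cardsUI J S1.
have dJ : N J :&: (N S1 :&: I) = set0.
  apply/setP=> x; rewrite !myE; apply/negP=> /andP[/inNP [y yJ eyx] /andP[_ xI]].
  move: yJ; rewrite /J !myE => /orP[yI|/andP[yNI _]].
    by move: (indI yI xI); rewrite eyx.
  move/negP: yNI; apply; apply/inNP; exists x => //; by rewrite e_sym.
have sJ : N J :|: (N S1 :&: I) \subset N (S :|: I).
  apply/subsetP=> x; rewrite !myE => /orP[xJ|/andP[xS1 _]].
    by apply: (subsetP (N_mono _) x xJ); apply/subsetP=> z; rewrite !myE;
       case: (z \in I); case: (z \in S); case: (z \in N I).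
  by apply: (subsetP (N_mono _) x xS1); apply/subsetP=> z; rewrite !myE => /andP[->].
have c2 := cardsUI (N J) (N S1 :&: I).
rewrite dJ cards0 in c2.
have c3 := subset_leq_card sJ.
have hJ : (dG I <= dG J)%R.
  rewrite /dH in sup *; lia.
have critJ : critical_indep e [set: T] J.
  apply: critI; first exact: subsetT.
    move=> x y; rewrite !myE => /orP[xI|/andP[xNI xS]] /orP[yI|/andP[yNI yS]].
    - exact: indI.
    - apply/negP=> exy; move/negP: yNI; apply; apply/inNP; exists x => //.
    - apply/negP=> exy; move/negP: xNI; apply; apply/inNP; exists y => //.
      by rewrite e_sym.
    - exact: indS.
  move=> Y _; exact: Order.le_trans (critG Y) hJ.
have hm := maxI critJ.
have IJ : I \subset J by apply: subsetUl.
have : I == J by rewrite eqEcard IJ hm.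
move/eqP=> eIJ.
apply/subsetP=> x xS; rewrite myE; case xN: (x \in N I); first by rewrite orbT.
by rewrite eIJ !myE xS xN orbT.
Qed.

Lemma key (S : {set T}) : max_critical_indep e [set: T] S ->
  max_critical_indep e (I :|: N I) S.
Proof.
case/andP=> cS /forallP mS.
have sX := subX cS.
case/critP: (cS) => _ indS critS.
have cI : critical_indep e [set: T] I.
  by apply: critI => //; exact: subsetT.
have IS := implyP (mS I) cI.
apply/andP; split.
  apply: critI => // Y sY.
  have h1 := F1 sY.
  have h2 := critS I (subsetT I).
  have h3 : #|nbhd e (I :|: N I) S| <= #|N S|.
    by apply: subset_leq_card; rewrite nbhdX subsetIl.
  rewrite /dH in h1 h2 *; lia.
apply/forallP=> S'; apply/implyP=> /critP [sS' indS' _].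
exact: leq_trans (bound_indep sS' indS') IS.
Qed.

End Aux.

Theorem lemma2p2 (T : finType) (e : rel T)
  (e_sym : symmetric e) (e_irr : irreflexive e)
  (I : {set T}) (hI : max_critical_indep e [set: T] I) :
  let X := I :|: nbhd e [set: T] I in
  diadem e [set: T] \subset diadem e X /\
  nucleus e X \subset nucleus e [set: T].
Proof.
move=> X.
case/andP: (hI) => cI /forallP mI.
case/critP: (cI) => _ indI critI.
have maxI : forall S, critical_indep e [set: T] S -> #|S| <= #|I|.
  by move=> S cS; exact: (implyP (mI S) cS).
have K := key e_sym indI (fun Y => critI Y (subsetT Y)) maxI.
split; apply/subsetP=> v.
  rewrite !inE => /existsP [S /andP[mS vS]].
  by apply/existsP; exists S; rewrite K.
rewrite !inE => /andP[_ /forallP H]; apply/forallP=> S; apply/implyP=> mS.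
exact: (implyP (H S) (K _ mS)).
Qed.
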